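(* Let $\mathcal L$ be any class of modules and let $\mathcal P$ be the class of strict $\mathcal L$-atomic modules. Let $\mathcal L'$ be the union of $\mathcal L$ with the class of all pure-injective modules in $\langle\mathcal L\rangle$, and let $\bar{\mathcal L}$ be the closure of $\mathcal L'$ under direct products, direct limits of directed systems, and locally $\mathcal P$-split sources. Then every strict $\mathcal L$-atomic module is strict $\bar{\mathcal L}$-atomic.
   Context: $R$ is a ring with $1$; modules are left $R$-modules; classes are nonempty. pp formulas and $\phi(M)$ as usual; $\langle\mathcal L\rangle$ is the definable subcategory generated by $\mathcal L$ (the class of modules $N$ with $\phi(N)\subseteq\psi(N)$ for all pp formulas with $\phi(L)\subseteq\psi(L)$ for every $L\in\mathcal L$). $(M,\bar m)$ is an $\mathcal L$-free realization of a pp formula $\phi$ if $\bar m\in\phi(M)$ and for every $L\in\mathcal L$ and $\bar c\in\phi(L)$ there is a homomorphism $M\to L$ sending $\bar m$ to $\bar c$; $M$ is strict $\mathcal L$-atomic if every finite tuple in $M$ is an $\mathcal L$-free realization of some pp formula. For a class $\mathcal P$, a homomorphism $f:A\to B$ is locally $\mathcal P$-split if for every tuple $\bar a$ in $A$, every $P\in\mathcal P$, every tuple $\bar p$ in $P$ and every homomorphism $g:P\to B$ with $g(\bar p)=f(\bar a)$, there is a homomorphism $h:P\to A$ with $h(\bar p)=\bar a$. A locally $\mathcal P$-split source of $B$ is a module $A$ admitting a locally $\mathcal P$-split homomorphism $A\to B$ (in particular, closure under locally $\mathcal P$-split sources includes closure under locally $\mathcal P$-split submodules). *)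

(* Defs.v *)
From HB Require Import structures.
From mathcomp Require Import all_boot all_order all_algebra.
Set Implicit Arguments. Unset Strict Implicit. Unset Printing Implicit Defensive.
Import GRing.Theory.
Local Open Scope ring_scope.

(* A pp formula in n free variables x:
     exists y (m variables),  (x,y) satisfies k linear equations with
     coefficient matrix mat : 'M[R]_(k, n + m),
   i.e. for each row i: sum_j mat i j *: z_j = 0, where z = (x, y). *)
Record ppf (R : nzRingType) (n : nat) := PPF {
  pp_m : nat;
  pp_k : nat;
  pp_mat : 'M[R]_(pp_k, n + pp_m) }.

Definition pp_sat (R : nzRingType) (M : lmodType R) (n : nat) (phi : ppf R n)
  (x : 'I_n -> M) : Prop :=
  exists y : 'I_(pp_m phi) -> M,
    forall i : 'I_(pp_k phi),
      \sum_(j < n + pp_m phi)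
         pp_mat phi i j *: (match split j with inl a => x a | inr b => y b end)
      = 0.

Definition defsub (R : nzRingType) (L : lmodType R -> Prop) (N : lmodType R) : Prop :=
  forall (n : nat) (phi psi : ppf R n),
    (forall M : lmodType R, L M -> forall x : 'I_n -> M, pp_sat phi x -> pp_sat psi x) ->
    forall x : 'I_n -> N, pp_sat phi x -> pp_sat psi x.

Definition free_realization (R : nzRingType) (L : lmodType R -> Prop) (M : lmodType R)
  (n : nat) (phi : ppf R n) (x : 'I_n -> M) : Prop :=
  pp_sat phi x /\
  forall L0 : lmodType R, L L0 -> forall c : 'I_n -> L0, pp_sat phi c ->
    exists f : {linear M -> L0}, forall i, f (x i) = c i.

Definition strict_atomic (R : nzRingType) (L : lmodType R -> Prop) (M : lmodType R) : Prop :=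
  forall (n : nat) (x : 'I_n -> M), exists phi : ppf R n, free_realization L phi x.

Definition locally_split (R : nzRingType) (P : lmodType R -> Prop) (A B : lmodType R)
  (f : {linear A -> B}) : Prop :=
  forall (n : nat) (a : 'I_n -> A) (Q : lmodType R), P Q ->
  forall (q : 'I_n -> Q) (g : {linear Q -> B}),
    (forall i, g (q i) = f (a i)) ->
    exists h : {linear Q -> A}, forall i, h (q i) = a i.

Definition is_product (R : nzRingType) (I : Type) (F : I -> lmodType R) (M : lmodType R)
  (p : forall i, {linear M -> F i}) : Prop :=
  forall (N : lmodType R) (g : forall i, {linear N -> F i}),
    exists h : {linear N -> M},
      (forall i x, p i (h x) = g i x) /\
      (forall h' : {linear N -> M}, (forall i x, p i (h' x) = g i x) -> forall x, h' x = h x).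

(* (F, f) is a directed system over the directed preorder (I, le); the maps
   f i j are only constrained when le i j. *)
Definition directed_system (R : nzRingType) (I : Type) (le : I -> I -> Prop)
  (F : I -> lmodType R) (f : forall i j, {linear F i -> F j}) : Prop :=
  inhabited I /\
  (forall i, le i i) /\
  (forall i j k, le i j -> le j k -> le i k) /\
  (forall i j, exists k, le i k /\ le j k) /\
  (forall i x, f i i x = x) /\
  (forall i j k, le i j -> le j k -> forall x, f j k (f i j x) = f i k x).

Definition is_dlimit (R : nzRingType) (I : Type) (le : I -> I -> Prop)
  (F : I -> lmodType R) (f : forall i j, {linear F i -> F j})
  (M : lmodType R) (u : forall i, {linear F i -> M}) : Prop :=
  (forall i j, le i j -> forall x, u j (f i j x) = u i x) /\
  forall (N : lmodType R) (v : forall i, {linear F i -> N}),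
    (forall i j, le i j -> forall x, v j (f i j x) = v i x) ->
    exists h : {linear M -> N},
      (forall i x, h (u i x) = v i x) /\
      (forall h' : {linear M -> N}, (forall i x, h' (u i x) = v i x) -> forall y, h' y = h y).

(* Pure monomorphisms (pp-formula characterization) and pure-injective modules. *)
Definition pure_mono (R : nzRingType) (A B : lmodType R) (f : {linear A -> B}) : Prop :=
  injective f /\
  forall (n : nat) (phi : ppf R n) (a : 'I_n -> A),
    pp_sat phi (fun i => f (a i)) -> pp_sat phi a.

Definition pure_injective (R : nzRingType) (N : lmodType R) : Prop :=
  forall (A B : lmodType R) (f : {linear A -> B}), pure_mono f ->
  forall g : {linear A -> N}, exists h : {linear B -> N}, forall a, h (f a) = g a.

Definition Lprime (R : nzRingType) (L : lmodType R -> Prop) (N : lmodType R) : Prop :=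
  L N \/ (pure_injective N /\ defsub L N).

Inductive lclosure (R : nzRingType) (C P : lmodType R -> Prop) : lmodType R -> Prop :=
| cl_base (M : lmodType R) : C M -> lclosure C P M
| cl_prod (I : Type) (F : I -> lmodType R) (M : lmodType R)
    (p : forall i, {linear M -> F i}) :
    is_product p -> (forall i, lclosure C P (F i)) -> lclosure C P M
| cl_dlim (I : Type) (le : I -> I -> Prop) (F : I -> lmodType R)
    (f : forall i j, {linear F i -> F j}) (M : lmodType R) (u : forall i, {linear F i -> M}) :
    directed_system le f -> is_dlimit le f u ->
    (forall i, lclosure C P (F i)) -> lclosure C P M
| cl_src (A B : lmodType R) (f : {linear A -> B}) :
    locally_split P f -> lclosure C P B -> lclosure C P A.

(* Main.v *)
Require Import Defs.
From mathcomp Require Import all_boot all_order all_algebra.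
From HB Require Import structures.
From mathcomp Require Import boolp.
Set Implicit Arguments. Unset Strict Implicit. Unset Printing Implicit Defensive.
Import GRing.Theory.
Local Open Scope ring_scope.

Section MkLin.
Variables (R : nzRingType) (U V : lmodType R) (f : U -> V).
Hypothesis fP : linear f.
Definition mkfun := f.
HB.instance Definition _ := GRing.isLinear.Build R U V *:%R mkfun fP.
Definition mklin : {linear U -> V} := mkfun.
Lemma mklinE x : mklin x = f x. Proof. by []. Qed.
End MkLin.

Record submod (R : nzRingType) (V : lmodType R) := Submod {
  sK :> V -> Prop;
  sK0 : sK 0;
  sKB : forall a b, sK a -> sK b -> sK (a - b);
  sKZ : forall r a, sK a -> sK (r *: a) }.

Section Quot.
Variables (R : nzRingType) (V : lmodType R) (S : submod V).
Definition qcls (v : V) : V -> Prop := fun w => S (w - v).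
Definition qT := {P : V -> Prop | exists v, P = qcls v}.
HB.instance Definition _ := gen_eqMixin qT.
HB.instance Definition _ := gen_choiceMixin qT.
Definition cls (v : V) : qT := exist _ (qcls v) (ex_intro _ v erefl).
Definition rep (q : qT) : V := projT1 (cid (proj2_sig q)).
Lemma repP q : proj1_sig q = qcls (rep q).
Proof. exact: (projT2 (cid (proj2_sig q))). Qed.
Lemma repK q : cls (rep q) = q.
Proof.
have H : forall (P1 P2 : V -> Prop) p1 p2, P1 = P2 -> exist (fun P => exists v, P = qcls v) P1 p1 = exist _ P2 p2.
  by move=> P1 P2 p1 p2 e; subst P2; congr exist; exact: Prop_irrelevance.
rewrite /cls; case: q (repP q) => P Pv /= e.
by apply: H.
Qed.
Lemma qind (P : qT -> Prop) : (forall v, P (cls v)) -> forall q, P q.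
Proof. by move=> H q; rewrite -(repK q). Qed.
Lemma SD a b : S a -> S b -> S (a + b).
Proof. move=> Ha Hb; have := sKB Ha (sKB (sK0 S) Hb); by rewrite sub0r opprK. Qed.
Lemma SN a : S a -> S (- a).
Proof. move=> Ha; have := sKB (sK0 S) Ha; by rewrite sub0r. Qed.
Lemma cls_eq v w : cls v = cls w <-> S (v - w).
Proof.
split.
  move=> e; have : qcls v v by rewrite /qcls subrr; exact: sK0.
  by have -> : qcls v = qcls w by move: e => /(congr1 (@proj1_sig _ _)).
move=> H; rewrite /cls; move: (ex_intro _ v _) (ex_intro _ w _).
have -> : qcls v = qcls w; last by move=> p1 p2; congr exist; exact: Prop_irrelevance.
apply: funext => u; apply: propext; rewrite /qcls; split => Hu.
  by have := SD Hu H; rewrite addrA subrK.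
by have := sKB Hu H; rewrite opprB addrA subrK.
Qed.
Lemma rep_cls v : S (rep (cls v) - v).
Proof. by apply/cls_eq; rewrite repK. Qed.
Definition qzero := cls 0.
Definition qadd q1 q2 := cls (rep q1 + rep q2).
Definition qopp q := cls (- rep q).
Definition qscale r q := cls (r *: rep q).
Lemma qaddE v w : qadd (cls v) (cls w) = cls (v + w).
Proof. apply/cls_eq; rewrite opprD addrACA; apply: SD; exact: rep_cls. Qed.
Lemma qoppE v : qopp (cls v) = cls (- v).
Proof. apply/cls_eq; rewrite opprK addrC -opprB; apply: SN; exact: rep_cls. Qed.
Lemma qscaleE r v : qscale r (cls v) = cls (r *: v).
Proof. apply/cls_eq; rewrite -scalerBr; apply: sKZ; exact: rep_cls. Qed.
Fact qaddA : associative qadd.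
Proof. by elim/qind => a; elim/qind => b; elim/qind => c; rewrite !qaddE addrA. Qed.
Fact qaddC : commutative qadd.
Proof. by elim/qind => a; elim/qind => b; rewrite !qaddE addrC. Qed.
Fact qadd0 : left_id qzero qadd.
Proof. by elim/qind => a; rewrite /qzero qaddE add0r. Qed.
Fact qaddN : left_inverse qzero qopp qadd.
Proof. by elim/qind => a; rewrite qoppE qaddE addNr. Qed.
HB.instance Definition _ := GRing.isZmodule.Build qT qaddA qaddC qadd0 qaddN.
Fact qscaleA a b v : qscale a (qscale b v) = qscale (a * b) v.
Proof. by elim/qind: v => v; rewrite !qscaleE scalerA. Qed.
Fact qscale1 : left_id 1 qscale.
Proof. by elim/qind => v; rewrite qscaleE scale1r. Qed.
Fact qscaleDr : right_distributive qscale qadd.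
Proof. by move=> a; elim/qind => u; elim/qind => v; rewrite qaddE !qscaleE qaddE scalerDr. Qed.
Fact qscaleDl v : {morph qscale^~ v: a b / a + b >-> qadd a b}.
Proof. by elim/qind: v => v a b; rewrite !qscaleE qaddE scalerDl. Qed.
HB.instance Definition _ := GRing.Zmodule_isLmodule.Build R qT qscaleA qscale1 qscaleDr qscaleDl.
Lemma cls_lin : linear cls.
Proof. by move=> a u v; rewrite -qaddE -qscaleE. Qed.
Definition clsL : {linear V -> qT} := mklin cls_lin.
Lemma cls0 v : cls v = 0 <-> S v.
Proof. by rewrite (cls_eq v 0) subr0. Qed.
End Quot.

Section DProd.
Variables (R : nzRingType) (I : Type) (F : I -> lmodType R).
Definition dpT := forall i, F i.
HB.instance Definition _ := gen_eqMixin dpT.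
HB.instance Definition _ := gen_choiceMixin dpT.
Definition dzero : dpT := fun i => 0.
Definition dadd (f g : dpT) : dpT := fun i => f i + g i.
Definition dopp (f : dpT) : dpT := fun i => - f i.
Definition dscale (r : R) (f : dpT) : dpT := fun i => r *: f i.
Let fe (f g : dpT) : (forall i, f i = g i) -> f = g := @functional_extensionality_dep _ _ f g.
Fact daddA : associative dadd. Proof. by move=> *; apply: fe => i; rewrite /dadd addrA. Qed.
Fact daddC : commutative dadd. Proof. by move=> *; apply: fe => i; rewrite /dadd addrC. Qed.
Fact dadd0 : left_id dzero dadd. Proof. by move=> *; apply: fe => i; rewrite /dadd add0r. Qed.
Fact daddN : left_inverse dzero dopp dadd. Proof. by move=> *; apply: fe => i; rewrite /dadd addNr. Qed.
HB.instance Definition _ := GRing.isZmodule.Build dpT daddA daddC dadd0 daddN.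
Fact dscaleA a b v : dscale a (dscale b v) = dscale (a * b) v.
Proof. by apply: fe => i; rewrite /dscale scalerA. Qed.
Fact dscale1 : left_id 1 dscale. Proof. by move=> v; apply: fe => i; rewrite /dscale scale1r. Qed.
Fact dscaleDr : right_distributive dscale dadd.
Proof. by move=> a u v; apply: fe => i; rewrite /dscale /dadd scalerDr. Qed.
Fact dscaleDl v : {morph dscale^~ v: a b / a + b >-> dadd a b}.
Proof. by move=> a b; apply: fe => i; rewrite /dscale /dadd scalerDl. Qed.
HB.instance Definition _ := GRing.Zmodule_isLmodule.Build R dpT dscaleA dscale1 dscaleDr dscaleDl.
Lemma dpE0 i : (0 : dpT) i = 0. Proof. by []. Qed.
Lemma dpED (f g : dpT) i : (f + g) i = f i + g i. Proof. by []. Qed.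
Lemma dpEN (f : dpT) i : (- f) i = - f i. Proof. by []. Qed.
Lemma dpEZ r (f : dpT) i : (r *: f) i = r *: f i. Proof. by []. Qed.
End DProd.

Check fun (R : nzRingType) (I : Type) (F : I -> lmodType R) => (dpT F : lmodType R).

Section PP.
Variable R : nzRingType.
Definition zz (T : Type)(n m : nat) (x : 'I_n -> T) (y : 'I_m -> T) (j : 'I_(n + m)) : T :=
  match split j with inl a => x a | inr b => y b end.
Lemma zz_map (T T' : Type) (f : T -> T')(n m : nat) (x : 'I_n -> T) (y : 'I_m -> T) j :
  zz (fun i => f (x i)) (fun i => f (y i)) j = f (zz x y j).
Proof. by rewrite /zz; case: (split j). Qed.
Lemma zzl (T : Type)(n m : nat) (x : 'I_n -> T) (y : 'I_m -> T) l : zz x y (lshift m l) = x l.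
Proof. by rewrite /zz (unsplitK (inl _ l)). Qed.
Lemma zzr (T : Type)(n m : nat) (x : 'I_n -> T) (y : 'I_m -> T) l : zz x y (rshift n l) = y l.
Proof. by rewrite /zz (unsplitK (inr _ l)). Qed.
Lemma split_l (n m : nat) (l : 'I_n) : split (lshift m l) = inl l.
Proof. exact: (unsplitK (inl _ l)). Qed.
Lemma split_r (n m : nat) (l : 'I_m) : split (rshift n l) = inr l.
Proof. exact: (unsplitK (inr _ l)). Qed.
Lemma zz_eta (T : Type) (n m : nat) (w : 'I_(n + m) -> T) j :
  zz (fun l => w (lshift m l)) (fun b => w (rshift n b)) j = w j.
Proof. by rewrite /zz -{2}(splitK j); case: (split j). Qed.

Lemma pp_satE (M : lmodType R) n (phi : ppf R n) (x : 'I_n -> M) :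
  pp_sat phi x <-> exists y : 'I_(pp_m phi) -> M, forall i,
     \sum_(j < n + pp_m phi) pp_mat phi i j *: zz x y j = 0.
Proof. by []. Qed.

Lemma pp_hom (M N : lmodType R) (f : {linear M -> N}) n (phi : ppf R n) (x : 'I_n -> M) :
  pp_sat phi x -> pp_sat phi (fun i => f (x i)).
Proof.
move=> [y Hy]; exists (fun b => f (y b)) => i.
have := Hy i; rewrite -/(zz _ _ _) => H.
transitivity (f (\sum_(j < n + pp_m phi) pp_mat phi i j *: zz x y j)).
  rewrite linear_sum; apply: eq_bigr => j _; by rewrite linearZ -zz_map.
by rewrite H linear0.
Qed.
End PP.

Section Aux.
Variable R : nzRingType.
Lemma ray_lin (N : lmodType R) (a : N) : linear (fun r : R^o => r *: a).
Proof. by move=> s u v; rewrite scalerDl scalerA. Qed.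
Definition rayL (N : lmodType R) (a : N) : {linear R^o -> N} := mklin (ray_lin a).

Lemma comp_lin (A B C : lmodType R) (g : {linear B -> C}) (f : {linear A -> B}) :
  linear (fun a => g (f a)).
Proof. by move=> s u v; rewrite !linearP. Qed.
Definition compL (A B C : lmodType R) (g : {linear B -> C}) (f : {linear A -> B}) :
  {linear A -> C} := mklin (comp_lin g f).

Lemma prod_ext (I : Type) (F : I -> lmodType R) (P : lmodType R)
  (p : forall i, {linear P -> F i}) : is_product p ->
  forall a b : P, (forall i, p i a = p i b) -> a = b.
Proof.
move=> Hp a b E.
have [h [_ Hu]] := Hp _ (fun i => compL (p i) (rayL a)).
have ea : forall r, rayL a r = h r.
  by apply: Hu.
have eb : forall r, rayL b r = h r.
  apply: Hu => i r; rewrite /compL /rayL /mklin /mkfun /=.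
  have H1 := linearZ_LR (p i) r b; have H2 := linearZ_LR (p i) r a.
  apply: etrans; first exact: H1.
  by rewrite -E; symmetry; apply: etrans; first exact: H2.
have Sa : rayL a 1 = a by exact: scale1r.
have Sb : rayL b 1 = b by exact: scale1r.
by rewrite -Sa -Sb ea eb.
Qed.
Lemma fst_sum (A B : lmodType R) p (G : 'I_p -> (A * B)%type) : (\sum_(i<p) G i).1 = \sum_(i<p) (G i).1.
Proof. by elim/big_rec2: _ => //= i y1 y2 _ <-. Qed.
Lemma snd_sum (A B : lmodType R) p (G : 'I_p -> (A * B)%type) : (\sum_(i<p) G i).2 = \sum_(i<p) (G i).2.
Proof. by elim/big_rec2: _ => //= i y1 y2 _ <-. Qed.
Lemma fstZ (A B : lmodType R) r (v : (A * B)%type) : (r *: v).1 = r *: v.1. Proof. by []. Qed.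
Lemma sndZ (A B : lmodType R) r (v : (A * B)%type) : (r *: v).2 = r *: v.2. Proof. by []. Qed.
Lemma inr_lin (A B : lmodType R) : linear (fun b : B => ((0 : A), b)).
Proof. by move=> r a b; congr pair; rewrite /= ?scaler0 ?addr0. Qed.
Lemma inl_lin (A B : lmodType R) : linear (fun a : A => (a, (0 : B))).
Proof. by move=> r a b; congr pair; rewrite /= ?scaler0 ?addr0. Qed.

Lemma sum_split (V : lmodType R) (n m : nat) (G : 'I_(n + m) -> V) :
  \sum_(j < n + m) G j = \sum_(l < n) G (lshift m l) + \sum_(b < m) G (rshift n b).
Proof. exact: big_split_ord. Qed.
Lemma sum_delta (V : lmodType R) (n : nat) (v : 'I_n -> V) l :
  \sum_(t < n) (t == l)%:R *: v t = v l.
Proof.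
rewrite (bigD1 l) //= eqxx scale1r big1 ?addr0 // => t /negbTE ->; by rewrite scale0r.
Qed.
End Aux.

Section Main.
Variables (R : nzRingType) (L : lmodType R -> Prop) (M : lmodType R) (n : nat)
  (phi : ppf R n) (x : 'I_n -> M).
Hypothesis Hfr : free_realization L phi x.
Hypothesis HM : strict_atomic L M.
Definition Qp (N : lmodType R) := forall c : 'I_n -> N, pp_sat phi c ->
  exists f : {linear M -> N}, forall i, f (x i) = c i.

Lemma Q_L N : L N -> Qp N.
Proof. by move=> HN c Hc; case: Hfr => _ H; apply: H. Qed.

Lemma Q_src (A B : lmodType R) (f : {linear A -> B}) :
  locally_split (strict_atomic L) f -> Qp B -> Qp A.
Proof.
move=> Hs QB c Hc.
have [g Hg] := QB _ (pp_hom f Hc).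
exact: (Hs n c M HM x g Hg).
Qed.

Lemma Q_prod (I : Type) (F : I -> lmodType R) (P : lmodType R)
    (p : forall i, {linear P -> F i}) :
  is_product p -> (forall i, Qp (F i)) -> Qp P.
Proof.
move=> Hp QF c Hc.
pose g := fun i => projT1 (cid (QF i _ (pp_hom (p i) Hc))).
have Hg : forall i l, g i (x l) = p i (c l) := fun i => projT2 (cid (QF i _ (pp_hom (p i) Hc))).
have [h [Hh _]] := Hp M g.
exists h => l; apply: (prod_ext Hp) => i.
by rewrite Hh Hg.
Qed.

Lemma zero_lin (A B : lmodType R) : linear (fun _ : A => (0 : B)).
Proof. move=> a y z /=. by rewrite scaler0 addr0. Qed.
Definition zeroL (A B : lmodType R) : {linear A -> B} := mklin (@zero_lin A B).

Section Dlim.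
Variables (I : Type) (le : I -> I -> Prop) (F : I -> lmodType R)
  (f : forall i j, {linear F i -> F j}) (N : lmodType R) (u : forall i, {linear F i -> N}).
Hypothesis Hds : directed_system le f.
Hypothesis Hdl : is_dlimit le f u.

Let inh : inhabited I. Proof. by case: Hds. Qed.
Let lerr : forall i, le i i. Proof. by case: Hds => _ [] H _. Qed.
Let letr : forall i j k, le i j -> le j k -> le i k. Proof. by case: Hds => _ [] _ [] H _. Qed.
Let ledir : forall i j, exists k, le i k /\ le j k. Proof. by case: Hds => _ [] _ [] _ [] H _. Qed.
Let fcomp : forall i j k, le i j -> le j k -> forall x, f j k (f i j x) = f i k x.
Proof. by case: Hds => _ [] _ [] _ [] _ [] _ H. Qed.
Let ucomp : forall i j, le i j -> forall x, u j (f i j x) = u i x.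
Proof. by case: Hdl => H _. Qed.

Lemma fin_bound (p : nat) (P : 'I_p -> I -> Prop) :
  (forall t i j, le i j -> P t i -> P t j) -> (forall t, exists i, P t i) ->
  exists s, forall t, P t s.
Proof.
elim: p P => [|p IH] P Pm Pe.
  by case: inh => i0; exists i0 => -[].
have [s1 H1] := IH (fun t => P (lift ord0 t)) (fun t => Pm _) (fun t => Pe _).
have [s0 H0] := Pe ord0.
have [k [h0 h1]] := ledir s0 s1.
exists k => t. case: (unliftP ord0 t) => [t' ->|->].
  exact: Pm h1 (H1 t').
exact: Pm h0 H0.
Qed.

Definition Ssurj (z : N) := exists i a, u i a = z.
Lemma Ss0 : Ssurj 0. Proof. by case: inh => i0; exists i0, 0; rewrite linear0. Qed.
Lemma SsB a b : Ssurj a -> Ssurj b -> Ssurj (a - b).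
Proof.
move=> [i [a' <-]] [j [b' <-]]; have [k [hi hj]] := ledir i j.
by exists k, (f i k a' - f j k b'); rewrite linearB !ucomp.
Qed.
Lemma SsZ r a : Ssurj a -> Ssurj (r *: a).
Proof. by move=> [i [a' <-]]; exists i, (r *: a'); rewrite linearZ. Qed.
Definition SsM := Submod Ss0 SsB SsZ.

Lemma dl_surj z : Ssurj z.
Proof.
case: Hdl => _ H.
have cc : forall i j, le i j -> forall a, compL (clsL SsM) (u j) (f i j a) = compL (clsL SsM) (u i) a.
  by move=> i j hij a; rewrite /= /mkfun ucomp.
have [h [_ Hu]] := H _ (fun i => compL (clsL SsM) (u i)) cc.
have e1 := Hu (clsL SsM) (fun i a => erefl).
have e2 : forall y, zeroL N (qT SsM) y = h y.
  apply: Hu => i a; symmetry; apply/(cls0 SsM); by exists i, a.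
apply/(cls0 SsM); have := e1 z; rewrite -e2 => e; exact: e.
Qed.
Definition Eev (g : dpT F) := exists i0, forall k, le i0 k -> g k = 0.
Lemma Ee0 : Eev 0. Proof. by case: inh => i0; exists i0. Qed.
Lemma EeB a b : Eev a -> Eev b -> Eev (a - b).
Proof.
move=> [i Ha] [j Hb]; have [k [hi hj]] := ledir i j.
exists k => l hl; rewrite dpED dpEN Ha ?Hb ?subrr //; [exact: letr hj hl | exact: letr hi hl].
Qed.
Lemma EeZ r a : Eev a -> Eev (r *: a).
Proof. by move=> [i Ha]; exists i => k hk; rewrite dpEZ Ha // scaler0. Qed.
Definition EeM := Submod Ee0 EeB EeZ.

Definition gi i (a : F i) : dpT F :=
  fun k => match pselect (le i k) with left h => f i k a | right _ => 0 end.
Lemma gi_lin i : linear (@gi i).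
Proof.
move=> r a b; apply: functional_extensionality_dep => k.
rewrite dpED dpEZ /gi; case: (pselect (le i k)) => _; first by rewrite linearP.
by rewrite scaler0 addr0.
Qed.
Definition giL i : {linear F i -> dpT F} := mklin (@gi_lin i).

Lemma dl_ker i a : u i a = 0 -> exists k, le i k /\ f i k a = 0.
Proof.
move=> Ha; case: Hdl => _ H.
have cc : forall i j, le i j -> forall a, compL (clsL EeM) (giL j) (f i j a) = compL (clsL EeM) (giL i) a.
  move=> i1 j hij a1; rewrite /= /mkfun; apply/(cls_eq EeM).
  exists j => k hk; rewrite dpED dpEN /gi.
  case: (pselect (le j k)) => h1; last by case: h1.
  case: (pselect (le i1 k)) => h2; last by case: h2; exact: letr hij hk.
  by rewrite fcomp // subrr.
have [h [Hh _]] := H _ (fun i => compL (clsL EeM) (giL i)) cc.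
have := Hh i a; rewrite Ha linear0 => e.
have : Eev (gi a) by apply/(cls0 EeM); rewrite /= /mkfun in e; rewrite -e.
move=> [i0 Hi0]; have [k [hi hk]] := ledir i i0.
exists k; split => //; have := Hi0 k hk; rewrite /gi.
by case: (pselect (le i k)).
Qed.
Lemma Q_dlim : (forall i, Qp (F i)) -> Qp N.
Proof.
move=> QF c [y Hy].
pose z := zz c y.
have [s Hs] := @fin_bound _ (fun t s => exists w, u s w = z t)
  (fun t i j hij '(ex_intro w hw) => ex_intro _ (f i j w) (etrans (ucomp hij w) hw))
  (fun t => dl_surj (z t)).
pose w := fun t => projT1 (cid (Hs t)).
have Hw : forall t, u s (w t) = z t := fun t => projT2 (cid (Hs t)).
pose e := fun i => \sum_(j < n + pp_m phi) pp_mat phi i j *: w j.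
have He : forall i, u s (e i) = 0.
  move=> i; rewrite -[RHS](Hy i) linear_sum; apply: eq_bigr => j _.
  by rewrite linearZ Hw.
have [k0 Hk0] := @fin_bound _ (fun i k => le s k /\ f s k (e i) = 0)
  (fun t i j hij '(conj h1 h2) => conj (letr h1 hij) (etrans (esym (fcomp h1 hij _)) (etrans (congr1 _ h2) (linear0 _))))
  (fun t => dl_ker (He t)).
have [k [hs hk0]] := ledir s k0.
have Hk : forall i, f s k (e i) = 0.
  move=> i; case: (Hk0 i) => h1 h2; by rewrite -(fcomp h1 hk0) h2 linear0.
pose c' := fun l => f s k (w (lshift (pp_m phi) l)).
pose y' := fun b => f s k (w (rshift n b)).
have Hc' : pp_sat phi c'.
  exists y' => i; rewrite -/(zz _ _ _).
  transitivity (f s k (e i)); last exact: Hk.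
  rewrite linear_sum; apply: eq_bigr => j _; rewrite linearZ; congr (_ *: _).
  have := zz_map (f s k) (fun l => w (lshift (pp_m phi) l)) (fun b => w (rshift n b)) j; rewrite zz_eta => <-; by [].
have [g Hg] := QF k c' Hc'.
exists (compL (u k) g) => l; rewrite /= /mkfun Hg /c' ucomp // Hw /z zzl //.
Qed.
End Dlim.

Section PInj.
Variables (N : lmodType R) (HN : pure_injective N) (HD : defsub L N)
  (c : 'I_n -> N) (Hc : pp_sat phi c).

Lemma ptype (psi : ppf R n) : pp_sat psi x -> pp_sat psi c.
Proof.
move=> Hx.
have H0 : forall L0 : lmodType R, L L0 -> forall z : 'I_n -> L0, pp_sat phi z -> pp_sat psi z.
  move=> L0 HL0 z Hz.
  case: Hfr => _ H; have [g Hg] := H L0 HL0 z Hz.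
  have := pp_hom g Hx.
  by have -> : (fun i => g (x i)) = z by apply: funext => i; rewrite Hg.
exact (HD H0 Hc).
Qed.

Definition Kp (w : (M * N)%type) := exists r : 'I_n -> R, w = \sum_(l < n) r l *: (x l, - c l).
Lemma Kp0 : Kp 0.
Proof. by exists (fun _ => 0); rewrite big1 // => l _; rewrite scale0r. Qed.
Lemma KpB a b : Kp a -> Kp b -> Kp (a - b).
Proof.
move=> [r1 ->] [r2 ->]; exists (fun l => r1 l - r2 l).
by rewrite -sumrB; apply: eq_bigr => l _; rewrite scalerBl.
Qed.
Lemma KpZ r a : Kp a -> Kp (r *: a).
Proof.
move=> [r1 ->]; exists (fun l => r * r1 l).
by rewrite scaler_sumr; apply: eq_bigr => l _; rewrite scalerA.
Qed.
Definition KpM := Submod Kp0 KpB KpZ.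
Definition Qm := qT KpM.
Definition iota (a : N) : Qm := cls KpM ((0 : M), a).
Lemma iota_lin : linear iota.
Proof. by move=> r a b; rewrite /iota -cls_lin inr_lin. Qed.
Definition iotaL : {linear N -> Qm} := mklin iota_lin.
Definition jm (m : M) : Qm := cls KpM (m, (0 : N)).
Lemma jm_lin : linear jm.
Proof. by move=> r a b; rewrite /jm -cls_lin inl_lin. Qed.
Definition jmL : {linear M -> Qm} := mklin jm_lin.

Lemma jm_x l : jm (x l) = iota (c l).
Proof.
apply/(cls_eq KpM); exists (fun t => (t == l)%:R); rewrite sum_delta.
by congr pair; rewrite /= ?subr0 ?sub0r.
Qed.

Lemma iota_pure p (psi : ppf R p) (a : 'I_p -> N) :
  pp_sat psi (fun i => iota (a i)) -> pp_sat psi a.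
Proof.
move=> [y Hy].
pose y' := fun b => rep (y b).
have ey : y = fun b => cls KpM (y' b) by apply: funext => b; rewrite /y' repK.
rewrite ey in Hy.
have HK : forall i, Kp (\sum_(j < p + pp_m psi) pp_mat psi i j *: zz (fun l => ((0 : M), a l)) y' j).
  move=> i; apply/(cls0 KpM); rewrite -[RHS](Hy i) -/(zz _ _ _).
  rewrite -[LHS]/(clsL KpM _) linear_sum; apply: eq_bigr => j _.
  by rewrite linearZ /= /mkfun -zz_map.
pose r := fun i => projT1 (cid (HK i)).
have Hr : forall i, _ = _ := fun i => projT2 (cid (HK i)).
pose chi := @PPF R n (pp_m psi) (pp_k psi)
  (\matrix_(i, j) match split j with inl l => - r i l | inr b => pp_mat psi i (rshift p b) end).
have E1 : forall i, \sum_(b < pp_m psi) pp_mat psi i (rshift p b) *: (y' b).1 = \sum_(l < n) r i l *: x l.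
  move=> i; have := congr1 fst (Hr i); rewrite !fst_sum sum_split.
  rewrite big1 ?add0r; last by move=> l _; rewrite fstZ zzl scaler0.
  move=> <-; apply: eq_bigr => b _; by rewrite fstZ zzr.
have E2 : forall i, \sum_(l < p) pp_mat psi i (lshift _ l) *: a l + \sum_(b < pp_m psi) pp_mat psi i (rshift p b) *: (y' b).2 = \sum_(l < n) r i l *: - c l.
  move=> i; have := congr1 snd (Hr i); rewrite !snd_sum sum_split => <-.
  congr (_ + _); apply: eq_bigr => b _; by rewrite sndZ ?zzl ?zzr.
have Hx : pp_sat chi x.
  exists (fun b => (y' b).1) => i; rewrite -/(zz _ _ _) sum_split /=.
  under eq_bigr => l _ do rewrite mxE split_l.
  under [X in _ + X]eq_bigr => b _ do rewrite mxE split_r.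
  by rewrite E1 -big_split; apply: big1 => l _ /=; rewrite scaleNr addNr.
have [w' Hw'] := ptype Hx.
exists (fun b => (y' b).2 + w' b) => i; rewrite -/(zz _ _ _) sum_split.
under [X in _ + X]eq_bigr => b _ do rewrite split_r /= scalerDr.
rewrite big_split /= addrA.
under eq_bigr => l _ do rewrite split_l /=.
rewrite E2.
have H0 : \sum_(l < n) - r i l *: c l + \sum_(b < pp_m psi) pp_mat psi i (rshift p b) *: w' b = 0.
  rewrite -[RHS](Hw' i) sum_split; congr (_ + _); apply: eq_bigr => l _; by rewrite mxE ?split_l ?split_r.
rewrite -[RHS]H0; congr (_ + _); apply: eq_bigr => l _.
by rewrite scaleNr scalerN.
Qed.

Definition psi1 : ppf R 1 := @PPF R 1 0 1 (const_mx 1).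
Lemma psi1E (V : lmodType R) (v : V) : pp_sat psi1 (fun _ => v) <-> v = 0.
Proof.
split.
  move=> [y /(_ ord0)]; rewrite sum_split big_ord1 big_ord0 addr0 mxE /=.
  by rewrite split_l scale1r.
move=> ->; exists (fun _ => 0) => i; rewrite sum_split big_ord1 big_ord0 addr0 mxE /=.
by rewrite split_l scale1r.
Qed.

Lemma iota_inj : injective iota.
Proof.
move=> a1 a2 e; apply/eqP; rewrite -subr_eq0; apply/eqP.
apply/psi1E; apply: iota_pure; apply/psi1E.
have -> : iota (a1 - a2) = iotaL (a1 - a2) by [].
rewrite linearB. have -> : iotaL a1 = iota a1 by []. by rewrite e subrr.
Qed.

Lemma Q_pinj : exists g : {linear M -> N}, forall i, g (x i) = c i.
Proof.
have Hpm : pure_mono iotaL.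
  split; first exact: iota_inj.
  move=> p psi a H; exact: iota_pure.
have idl : linear (fun a : N => a) by [].
have [h Hh] := HN Hpm (mklin idl).
exists (compL h jmL) => i; rewrite /= /mkfun jm_x.
exact: Hh.
Qed.
End PInj.
End Main.

Unset Implicit Arguments.
Set Strict Implicit.

Theorem proposition2p6 (R : nzRingType) (L : lmodType R -> Prop) :
  (exists M0 : lmodType R, L M0) ->
  forall M : lmodType R, strict_atomic L M ->
    strict_atomic (lclosure (Lprime L) (strict_atomic L)) M.
Proof.
move=> _ M HM n x; have [phi Hfr] := HM n x.
exists phi; split; first by case: Hfr.
move=> N HN; elim: HN.
- move=> N0 HN0; case: HN0 => [HL|[Hpi Hds]].
    exact: (Q_L Hfr HL).
  move=> c Hc; exact: (Q_pinj Hfr Hpi Hds Hc).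
- move=> I F P p Hp _ IH; exact: (Q_prod Hp IH).
- move=> I le F f P u Hds Hdl _ IH; exact: (Q_dlim Hds Hdl IH).
- move=> A B f Hs _ IH; exact: (Q_src HM Hs IH).
Qed.
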